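(* Let $a>0$, $c>0$, and let $y$ be the solution of $\dot y(t)=\frac{c}{y(t)}-1$ with $y(0)=a$. Then for every $t\ge0$ with $t\ge a+c\log(a/c)$ we have $y(t)\le2c$. *)

(* Defs.v *)
From Stdlib Require Import Reals.
Open Scope R_scope.

Definition ode_solution (a c : R) (y : R -> R) : Prop :=
  y 0 = a /\
  (forall eps, 0 < eps -> exists delta, 0 < delta /\
      forall t, 0 <= t < delta -> Rabs (y t - a) < eps) /\
  (forall t, 0 <= t -> y t <> 0) /\
  (forall t, 0 < t -> derivable_pt_lim y t (c / y t - 1)).

(* Main.v *)
Require Import Defs.
From Stdlib Require Import Reals Lra.
Open Scope R_scope.

Lemma exp_le_inc (x z : R) : x <= z -> exp x <= exp z.
Proof. intro H. destruct (Rle_lt_or_eq_dec _ _ H) as [H1|H1].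
  - left. apply exp_increasing. exact H1.
  - subst. lra. Qed.

Lemma K_deriv (c : R) (y : R -> R) t :
  0 < c -> y t <> 0 -> derivable_pt_lim y t (c / y t - 1) ->
  derivable_pt_lim (fun s => (y s - c) * exp ((y s + s) / c)) t 0.
Proof.
  intros Hc Hy Hd.
  assert (D1 : derivable_pt_lim (fun s => y s - c) t (c / y t - 1 - 0)).
  { apply (derivable_pt_lim_minus y (fct_cte c)); [exact Hd | apply derivable_pt_lim_const]. }
  assert (D2 : derivable_pt_lim (fun s => (y s + s) / c) t ((c / y t - 1 + 1) * / c)).
  { change (fun s => (y s + s) / c) with (fun s => (y s + id s) * (fct_cte (/ c)) s).
    replace ((c / y t - 1 + 1) * / c) with ((c / y t - 1 + 1) * fct_cte (/c) t + (y t + id t) * 0)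
      by (unfold fct_cte; ring).
    apply (derivable_pt_lim_mult (fun s => y s + id s) (fct_cte (/c))).
    - apply (derivable_pt_lim_plus y id); [exact Hd | apply derivable_pt_lim_id].
    - apply derivable_pt_lim_const. }
  assert (D3 : derivable_pt_lim (fun s => exp ((y s + s) / c)) t
                 (exp ((y t + t)/c) * ((c / y t - 1 + 1) * / c))).
  { apply (derivable_pt_lim_comp (fun s => (y s + s) / c) exp); [exact D2 | apply derivable_pt_lim_exp]. }
  replace 0 with ((c / y t - 1 - 0) * exp ((y t + t)/c) + (y t - c) * (exp ((y t + t)/c) * ((c / y t - 1 + 1) * / c))).
  - apply (derivable_pt_lim_mult (fun s => y s - c) (fun s => exp ((y s + s) / c))); assumption.
  - field. split; lra.
Qed.

Theorem lemma15 (a c : R) (y : R -> R) :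
  0 < a -> 0 < c -> ode_solution a c y ->
  forall t, 0 <= t -> a + c * ln (a / c) <= t -> y t <= 2 * c.
Proof.
  intros Ha Hc [Hy0 [Hcont [Hnz Hder]]] t Ht0 Ht.
  set (K := fun s => (y s - c) * exp ((y s + s) / c)).
  set (K0 := (a - c) * exp (a / c)).
  assert (HK : K t = K0).
  { destruct (Req_dec t 0) as [E|E].
    - unfold K, K0. subst t. rewrite Hy0, Rplus_0_r. reflexivity.
    - assert (Htp : 0 < t) by lra.
      assert (Hconst : forall s, 0 < s <= t -> K s = K t).
      { intros s [Hs1 Hs2]. destruct (Req_dec s t) as [E2|E2]; [now subst|].
        destruct (MVT_cor2 K (fun _ => 0) s t) as [x [Hx _]]; [lra| |lra].
        intros x Hx. apply K_deriv; [lra | apply Hnz; lra | apply Hder; lra]. }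
      set (h := fun u => (u - c) * exp (u / c)).
      assert (Hh : continuity_pt h a).
      { apply derivable_continuous_pt.
        apply derivable_pt_mult.
        - apply derivable_pt_minus; [apply derivable_pt_id | apply derivable_pt_const].
        - apply (derivable_pt_comp (fun u => u / c) exp).
          + apply derivable_pt_div; [apply derivable_pt_id | apply derivable_pt_const | lra].
          + apply derivable_pt_exp. }
      set (C := K t).
      assert (HhK : forall s, 0 < s <= t -> h (y s) = C * exp (- s / c)).
      { intros s Hs. unfold C. rewrite <- (Hconst s Hs). unfold K, h.
        replace ((y s + s)/c) with (y s / c + s / c) by (field; lra).
        rewrite exp_plus. replace (- s / c) with (- (s / c)) by (field; lra).
        rewrite exp_Ropp. field. apply Rgt_not_eq. apply exp_pos. }
      assert (Hh0 : h a = K0) by reflexivity.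
      apply Rminus_diag_uniq.
      cut (Rabs (C - K0) <= 0).
      { intro HH. destruct (Req_dec (C - K0) 0) as [Z|Z]; [exact Z|].
        pose proof (Rabs_pos_lt _ Z). lra. }
      apply le_epsilon. intros eps Heps. rewrite Rplus_0_l.
      assert (Heps2 : 0 < eps / 2) by lra.
      destruct (Hh (eps/2) Heps2) as [d1 [Hd1 Hd1']].
      destruct (Hcont d1 Hd1) as [d [Hd Hd']].
      set (s := Rmin (d / 2) (Rmin t (eps / 2 * c / (Rabs C + 1)))).
      assert (HRC : 0 < Rabs C + 1) by (pose proof (Rabs_pos C); lra).
      assert (Hsp : 0 < s).
      { unfold s. repeat apply Rmin_glb_lt; try lra.
        apply Rdiv_lt_0_compat; [nra | lra]. }
      assert (Hs1 : s <= d / 2) by apply Rmin_l.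
      assert (Hs2 : s <= t) by (unfold s; eapply Rle_trans; [apply Rmin_r | apply Rmin_l]).
      assert (Hs3 : s <= eps / 2 * c / (Rabs C + 1))
        by (unfold s; eapply Rle_trans; [apply Rmin_r | apply Rmin_r]).
      assert (Hya : Rabs (y s - a) < d1) by (apply Hd'; lra).
      assert (Hhy : Rabs (h (y s) - h a) < eps / 2).
      { destruct (Req_dec (y s) a) as [E3|E3].
        - rewrite E3, Rminus_diag, Rabs_R0. lra.
        - apply Hd1'. split; [split; [exact I | auto] | exact Hya]. }
      rewrite HhK in Hhy by lra. rewrite Hh0 in Hhy.
      (* |C - K0| <= |C - C e^{-s/c}| + |C e^{-s/c} - K0| *)
      assert (He1 : exp (- s / c) <= 1).
      { rewrite <- exp_0. apply exp_le_inc. apply Rmult_le_reg_r with c; [lra|].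
        unfold Rdiv. rewrite Rmult_assoc, Rinv_l by lra. lra. }
      assert (He2 : 1 + - s / c <= exp (- s / c)) by apply exp_ineq1_le.
      assert (Hb : Rabs (C - C * exp (- s / c)) <= eps / 2).
      { replace (C - C * exp (- s / c)) with (C * (1 - exp (- s / c))) by ring.
        rewrite Rabs_mult, (Rabs_right (1 - _)) by lra.
        apply Rle_trans with (Rabs C * (s / c)).
        - apply Rmult_le_compat_l; [apply Rabs_pos|].
          replace (s / c) with (- (- s / c)) by (field; lra). lra.
        - apply Rle_trans with ((Rabs C + 1) * (s / c)).
          + apply Rmult_le_compat_r; [apply Rlt_le, Rdiv_lt_0_compat; lra | lra].
          + apply Rmult_le_reg_r with c; [lra|].
            replace ((Rabs C + 1) * (s / c) * c) with ((Rabs C + 1) * s) by (field; lra).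
            apply Rmult_le_compat_l with (r := Rabs C + 1) in Hs3; [|lra].
            replace ((Rabs C + 1) * (eps / 2 * c / (Rabs C + 1))) with (eps / 2 * c) in Hs3 by (field; lra).
            lra. }
      replace (C - K0) with ((C - C * exp (- s / c)) + (C * exp (- s / c) - K0)) by ring.
      eapply Rle_trans; [apply Rabs_triang|]. lra. }
  destruct (Rle_dec (y t) (2 * c)) as [H|H]; [exact H|exfalso].
  apply Rnot_le_lt in H.
  unfold K, K0 in HK.
  assert (E1 : exp ((a + c * ln (a / c)) / c) = exp (a / c) * (a / c)).
  { replace ((a + c * ln (a / c)) / c) with (a / c + ln (a / c)) by (field; lra).
    rewrite exp_plus, exp_ln; [reflexivity | apply Rdiv_lt_0_compat; lra]. }
  assert (E2 : exp ((a + c * ln (a / c)) / c) <= exp (t / c)).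
  { apply exp_le_inc. apply Rmult_le_compat_r; [apply Rlt_le, Rinv_0_lt_compat; lra | lra]. }
  assert (E3 : exp (2 + t / c) <= exp ((y t + t) / c)).
  { apply exp_le_inc. replace ((y t + t) / c) with (y t / c + t / c) by (field; lra).
    apply Rplus_le_compat_r. apply Rmult_le_reg_r with c; [lra|].
    unfold Rdiv. rewrite Rmult_assoc, Rinv_l by lra. lra. }
  rewrite exp_plus in E3.
  assert (E4 : 1 < exp 2) by (pose proof (exp_ineq1 2); lra).
  pose proof (exp_pos (a / c)) as P1.
  pose proof (exp_pos (t / c)) as P2.
  assert (F1 : c * (exp (a / c) * (a / c)) = a * exp (a / c)) by (field; lra).
  assert (F2 : c * exp (t / c) < (y t - c) * exp ((y t + t) / c)).
  { apply Rlt_le_trans with (c * (exp 2 * exp (t / c))).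
    - apply Rmult_lt_compat_l; [lra|]. nra.
    - apply Rmult_le_compat; nra. }
  assert (F3 : c * (exp (a / c) * (a / c)) <= c * exp (t / c)).
  { apply Rmult_le_compat_l; [lra|]. rewrite <- E1. exact E2. }
  rewrite HK in F2. nra.
Qed.
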